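(* Let $k\ge1$ and $\ell\ge1$. The set $\{n\in A_{2k}:\max\mathcal{CG}(n)=F_{2k+2\ell}\}$ is exactly $\{q(j):F_{2\ell+1}+1\le j\le F_{2\ell+3}\}$; i.e. its elements occupy precisely positions $F_{2\ell+1}+1$ through $F_{2\ell+3}$ (inclusive) in the increasing enumeration of $A_{2k}$.
   Context: Fibonacci numbers: $F_1=F_2=1$, $F_{n+1}=F_n+F_{n-1}$ for $n\ge2$. Chung–Graham decomposition: every positive integer $n$ has a unique representation $n=\sum_{i\ge1}c_iF_{2i}$ with $c_i\in\{0,1,2\}$, only finitely many nonzero, such that whenever $c_i=c_j=2$ with $i<j$ there is $k$ with $i<k<j$ and $c_k=0$. Let $\mathcal{CG}(n)$ be the set of $F_{2i}$ with $c_i\neq0$. For $k\ge1$, $A_{2k}=\{n\ge1:\min\mathcal{CG}(n)=F_{2k}\}$, and $q(1)<q(2)<q(3)<\cdots$ denote the elements of $A_{2k}$ listed in increasing order. *)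

(* Defs.v *)
From mathcomp Require Import all_boot.
Set Implicit Arguments. Unset Strict Implicit. Unset Printing Implicit Defensive.

Fixpoint fib (n : nat) : nat :=
  match n with
  | 0 => 0
  | 1 => 1
  | (m.+1 as p).+1 => fib p + fib m
  end.

(* A candidate Chung–Graham representation of n: c_(i+1) := c i for i < n
   (coefficient of F_{2(i+1)}), digits in {0,1,2}.  Coefficients c_i with i > n
   are necessarily 0 since F_{2i} >= i > n, so length n suffices. *)
Definition CGrep (n : nat) (c : {ffun 'I_n -> 'I_3}) : bool :=
  (\sum_(i < n) (c i : nat) * fib (2 * i.+1) == n) &&
  [forall i : 'I_n, forall j : 'I_n,
     [&& i < j, (c i : nat) == 2 & (c j : nat) == 2] ==>
     [exists m : 'I_n, [&& i < m, m < j & (c m : nat) == 0]]].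

Definition CG (n : nat) : seq nat :=
  if [pick c : {ffun 'I_n -> 'I_3} | CGrep c] is Some c then
    [seq fib (2 * (val i).+1) | i <- enum 'I_n & (c i : nat) != 0]
  else [::].

Definition inA (k n : nat) : bool :=
  [&& 0 < n, fib (2 * k) \in CG n & all (fun x => fib (2 * k) <= x) (CG n)].

Definition maxCG_is (n v : nat) : bool :=
  (v \in CG n) && all (fun x => x <= v) (CG n).

(* 1-based position of n in the increasing enumeration q(1) < q(2) < ... of A_{2k}
   (meaningful when inA k n): the number of elements of A_{2k} that are <= n. *)
Definition posA (k n : nat) : nat := \sum_(1 <= m < n.+1) inA k m.

(* Main.v *)
Require Import Defs.
From mathcomp Require Import all_boot.
From mathcomp Require zify.
From Stdlib Require Import Lia.
Set Implicit Arguments. Unset Strict Implicit. Unset Printing Implicit Defensive.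

Lemma fibSS n : fib n.+2 = fib n.+1 + fib n. Proof. by []. Qed.

Lemma fib_pos n : 0 < fib n.+1.
Proof.
suff: 0 < fib n.+1 /\ 0 < fib n.+2 by case.
elim: n => [|n [h1 h2]]; first by [].
split=> //; rewrite fibSS; lia.
Qed.

Lemma fib_le1 n : fib n <= fib n.+1.
Proof. case: n => [|n] //; rewrite fibSS; lia. Qed.

Lemma fib_mono a b : a <= b -> fib a <= fib b.
Proof.
move=> h; rewrite -(subnKC h); elim: (b - a) => [|d IH]; first by rewrite addn0.
rewrite addnS; exact: leq_trans IH (fib_le1 _).
Qed.

Lemma fib_lt a b : 2 <= a -> a < b -> fib a < fib b.
Proof.
move=> ha hab; case: a ha hab => [|[|a]] // _ hab.
apply: (@leq_trans (fib a.+3)); last exact: fib_mono.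
rewrite (fibSS a.+1); have := fib_pos a; lia.
Qed.

Lemma fib_ge n : n.+1 <= fib n.+2.
Proof.
elim: n => [|n IH] //; rewrite fibSS; have := fib_pos n; lia.
Qed.

Definition wt i := fib (2 * i.+1).
Definition ow i := fib (2 * i).+1.

Lemma wt_lt a b : a < b -> wt a < wt b.
Proof. move=> h; apply: fib_lt; lia. Qed.
Lemma wt_le a b : a <= b -> wt a <= wt b.
Proof. move=> h; apply: fib_mono; lia. Qed.
Lemma wt_leE a b : (wt a <= wt b) = (a <= b).
Proof.
case: (leqP a b) => h; first exact: wt_le.
by apply/negbTE; rewrite -ltnNge; apply: wt_lt.
Qed.
Lemma wt_inj a b : wt a = wt b -> a = b.
Proof. move=> h; apply/eqP; by rewrite eqn_leq -(wt_leE a b) -(wt_leE b a) h leqnn. Qed.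
Lemma wt_gt n : n < wt n.
Proof.
rewrite /wt; have h := fib_ge (2 * n).
have E : 2 * n.+1 = (2 * n).+2 by lia.
rewrite E; lia.
Qed.
Lemma wt_pos n : 0 < wt n.
Proof. rewrite /wt; have E : 2 * n.+1 = (2 * n).+1.+1 by lia. rewrite E; exact: (fib_pos (2 * n).+1). Qed.
Lemma ow_pos n : 0 < ow n. Proof. exact: (fib_pos (2 * n)). Qed.
Lemma wtS n : wt n.+1 = wt n + wt n + ow n.
Proof.
rewrite /wt /ow.
have -> : 2 * n.+2 = (2 * n).+4 by lia.
have -> : 2 * n.+1 = (2 * n).+2 by lia.
set x := 2 * n.
rewrite (fibSS x.+2) (fibSS x.+1) (fibSS x); lia.
Qed.
Lemma owS n : ow n.+1 = wt n + ow n.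
Proof.
rewrite /wt /ow.
have -> : 2 * n.+1 = (2 * n).+2 by lia.
set x := 2 * n.
by rewrite (fibSS x.+1).
Qed.
Lemma ow_le n : ow n <= wt n.
Proof. rewrite /wt /ow; apply: fib_mono; lia. Qed.

Fixpoint vl (N : nat) (d : nat -> nat) : nat :=
  if N is N'.+1 then vl N' d + d N' * wt N' else 0.

Definition valid N (d : nat -> nat) :=
  (forall i, i < N -> d i <= 2) /\
  (forall i j, i < j -> j < N -> d i = 2 -> d j = 2 ->
     exists m, [/\ i < m, m < j & d m = 0]).

Definition no2top N (d : nat -> nat) :=
  forall j, j < N -> d j = 2 -> exists m, [/\ j < m, m < N & d m = 0].

Definition upd (d : nat -> nat) m c := fun j => if j == m then c else d j.

Lemma vl_eq N d e : (forall i, i < N -> d i = e i) -> vl N d = vl N e.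
Proof.
elim: N => [//|N IH] H /=; rewrite IH ?H //; move=> i hi; apply: H; lia.
Qed.

Lemma valid_eqon N d e : (forall i, i < N -> d i = e i) -> valid N d -> valid N e.
Proof.
move=> H [h1 h2]; split.
  by move=> i hi; rewrite -H //; apply: h1.
move=> i j hij hj; rewrite -(H i) -?(H j) //; try lia.
move=> di dj; have [m [m1 m2 m3]] := h2 i j hij hj di dj.
exists m; split=> //; rewrite -H //; lia.
Qed.

Lemma no2top_eqon N d e : (forall i, i < N -> d i = e i) -> no2top N d -> no2top N e.
Proof.
move=> H h j hj; rewrite -H // => dj; have [m [m1 m2 m3]] := h j hj dj.
by exists m; split=> //; rewrite -H.
Qed.

Lemma valid_le N M d : valid N d -> M <= N -> valid M d.
Proof.
move=> [h1 h2] hMN; split; first by move=> i hi; apply: h1; lia.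
move=> i j hij hj; apply: h2 => //; lia.
Qed.

Lemma valid_ext M N d : valid M d -> (forall j, M <= j -> d j = 0) -> valid N d.
Proof.
move=> [h1 h2] hz; split.
  move=> i _; case: (ltnP i M) => h; [exact: h1 | by rewrite hz].
move=> i j hij hj di dj; case: (ltnP j M) => h; first exact: h2.
by move: dj; rewrite hz.
Qed.

Lemma valid_S2 N d : valid N.+1 d -> d N = 2 -> no2top N d.
Proof. by move=> [_ h2] dN j hj dj; apply: h2. Qed.

Lemma bound N d : valid N d -> vl N d < wt N /\ (no2top N d -> vl N d < ow N).
Proof.
elim: N => [|N IH] hv; first by [].
have hv' := valid_le hv (leqnSn N).
have [IH1 IH2] := IH hv'.
have hd := hv.1 N (ltnSn N).
rewrite /= wtS owS.
case E: (d N) hd => [|[|[|x]]] // _.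
- split; first lia. move=> _; lia.
- split; first lia. move=> h; suff: vl N d < ow N by lia.
  apply: IH2 => j hj dj; have [m [m1 m2 m3]] := h j (leq_trans hj (leqnSn _)) dj.
  exists m; split=> //; case: (ltngtP m N) m2 => //; [lia | move=> e; by rewrite e E in m3].
- have h2 := IH2 (valid_S2 hv E); split; first lia.
  move=> h; have [m [m1 m2 m3]] := h N (ltnSn N) E; lia.
Qed.

Lemma vl_upd N d c : vl N.+1 (upd d N c) = vl N d + c * wt N.
Proof.
rewrite /= /upd eqxx; congr (_ + _); apply: vl_eq => i hi.
by rewrite ifN //; rewrite neq_ltn hi.
Qed.

Lemma upd_lt d N c i : i < N -> upd d N c i = d i.
Proof. by move=> hi; rewrite /upd ifN // neq_ltn hi. Qed.

Lemma valid_upd N d c : valid N d -> c <= 2 -> (c = 2 -> no2top N d) ->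
  valid N.+1 (upd d N c).
Proof.
move=> [h1 h2] hc h3; split.
  move=> i hi; rewrite /upd; case: eqP => [//|ne]; apply: h1; lia.
move=> i j hij hj; rewrite (upd_lt _ _ (leq_trans hij hj)) => di.
have [hjN|hjN] := ltnP j N; last (have E : j = N by lia); last subst j.
  rewrite upd_lt // => dj; have [m [m1 m2 m3]] := h2 i j hij hjN di dj.
  by exists m; split=> //; rewrite upd_lt //; lia.
rewrite /upd eqxx => c2; have [m [m1 m2 m3]] := h3 c2 i hij di.
by exists m; split=> //; have -> : (m == N) = false by apply/eqP; lia.
Qed.

Lemma no2top_upd0 N d : no2top N.+1 (upd d N 0).
Proof.
move=> j hj; have [hjN|hjN] := ltnP j N; last (have E : j = N by lia); last subst j.
  rewrite upd_lt // => _; exists N; split=> //; by rewrite /upd eqxx.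
by rewrite /upd eqxx.
Qed.

Lemma no2top_upd1 N d : no2top N d -> no2top N.+1 (upd d N 1).
Proof.
move=> h j hj; have [hjN|hjN] := ltnP j N; last (have E : j = N by lia); last subst j.
  rewrite upd_lt // => dj; have [m [m1 m2 m3]] := h j hjN dj.
  by exists m; split=> //; [lia | rewrite upd_lt].
by rewrite /upd eqxx.
Qed.

Lemma exist N n : (n < wt N -> exists d, valid N d /\ vl N d = n) /\
  (n < ow N -> exists d, [/\ valid N d, no2top N d & vl N d = n]).
Proof.
elim: N n => [|N IH] n.
  have h0 : forall n, n < 1 -> n = 0 by move=> m; lia.
  split=> [h | h]; exists (fun _ => 0); rewrite (h0 n h); do ?split => //.
rewrite wtS owS; split=> hn.
- case: (ltnP n (wt N)) => h1.
    have [d [vd ed]] := (IH n).1 h1; exists (upd d N 0).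
    split; first by apply: valid_upd.
    by rewrite vl_upd ed; lia.
  case: (ltnP n (wt N + wt N)) => h2.
    have [d [vd ed]] := (IH (n - wt N)).1 ltac:(lia); exists (upd d N 1).
    split; first by apply: valid_upd.
    by rewrite vl_upd ed; lia.
  have [d [vd nd ed]] := (IH (n - wt N - wt N)).2 ltac:(lia); exists (upd d N 2).
  split; first by apply: valid_upd.
  by rewrite vl_upd ed; lia.
- case: (ltnP n (wt N)) => h1.
    have [d [vd ed]] := (IH n).1 h1; exists (upd d N 0).
    split; first by apply: valid_upd.
      exact: no2top_upd0.
    by rewrite vl_upd ed; lia.
  have [d [vd nd ed]] := (IH (n - wt N)).2 ltac:(lia); exists (upd d N 1).
  split; first by apply: valid_upd.
    exact: no2top_upd1.
  by rewrite vl_upd ed; lia.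
Qed.

Lemma uniq N d e : valid N d -> valid N e -> vl N d = vl N e ->
  forall i, i < N -> d i = e i.
Proof.
elim: N => [//|N IH] vd ve.
have vd' := valid_le vd (leqnSn N); have ve' := valid_le ve (leqnSn N).
have bd := (bound vd').1; have be := (bound ve').1.
have hd := vd.1 N (ltnSn N); have he := ve.1 N (ltnSn N).
rewrite /= => E.
have EN : d N = e N.
  move: E hd he; case: (d N) => [|[|[|x]]]; case: (e N) => [|[|[|y]]] //; lia.
have E' : vl N d = vl N e by rewrite EN in E; lia.
move=> i hi; have [h|h] := ltnP i N; first exact: IH.
have -> : i = N by lia. exact: EN.
Qed.

Lemma vl_ge N d j : j < N -> d j * wt j <= vl N d.
Proof.
elim: N => [//|N IH] hj /=; have [h|h] := ltnP j N.
  have := IH h; lia.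
have -> : j = N by lia. lia.
Qed.

Lemma vl_ext M N d : (forall j, M <= j -> d j = 0) -> M <= N -> vl N d = vl M d.
Proof.
move=> hz; elim: N => [|N IH] hMN; first by have -> : M = 0 by lia.
have [h|h] := ltnP M N.+1; last by have -> : M = N.+1 by lia.
by rewrite /= IH ?hz //; lia.
Qed.

Lemma vl_0 N d : (forall i, i < N -> d i = 0) -> vl N d = 0.
Proof. move=> h; rewrite (vl_eq (e := fun _ => 0) h); by elim: N {h} => //= N ->. Qed.

Definition Rep n d := [/\ valid n d, (forall j, n <= j -> d j = 0) & vl n d = n].

Lemma Rep_exists n : exists d, Rep n d.
Proof.
have [d [vd ed]] := (exist n n).1 (wt_gt n).
exists (fun j => if j < n then d j else 0); split.
- by apply: valid_eqon vd => i ->.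
- by move=> j hj; rewrite ltnNge hj.
- by rewrite (@vl_eq n _ d) // => i ->.
Qed.

Lemma Rep_valid n d M : Rep n d -> valid M d.
Proof. by case=> v z _; apply: valid_ext v z. Qed.

Lemma Rep_vl n d M : Rep n d -> (forall j, M <= j -> d j = 0) -> vl M d = n.
Proof.
case=> _ z e hM.
rewrite -(@vl_ext M (M + n) d hM) ?leq_addr //.
by rewrite (@vl_ext n (M + n) d z) ?leq_addl.
Qed.

Lemma Rep_uniq n d e : Rep n d -> Rep n e -> forall j, d j = e j.
Proof.
move=> [vd zd ed] [ve ze ee] j.
have [h|h] := ltnP j n; last by rewrite zd ?ze.
by apply: (uniq vd ve) => //; rewrite ed ee.
Qed.

Lemma Rep_supp n d j : Rep n d -> d j <> 0 -> wt j <= n.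
Proof.
move=> [v z e] nz; have [h|h] := ltnP j n; last by case: nz; apply: z.
have := vl_ge d h; rewrite e; move: nz; case: (d j) => // x _; lia.
Qed.

Lemma Rep_zero n d M : Rep n d -> n < wt M -> forall j, M <= j -> d j = 0.
Proof.
move=> R hn j hj; case E: (d j) => [//|x].
have := Rep_supp R (j := j); rewrite E => /(_ ltac:(done)) h.
have := wt_le hj; lia.
Qed.

Lemma Rep_all0 n d : Rep n d -> (forall j, d j = 0) -> n = 0.
Proof. move=> R h; rewrite -(Rep_vl (M := 0) R) //. Qed.

Lemma Rep_shift i d m c : Rep i d ->
  (c = 1 /\ i < wt m \/ c = 2 /\ i < ow m) ->
  Rep (c * wt m + i) (upd d m c).
Proof.
move=> R hc.
have iw : i < wt m by case: hc => [[_ h]|[_ h]] //; exact: leq_trans h (ow_le m).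
have c12 : 1 <= c <= 2 by case: hc => [[-> _]|[-> _]].
have dz := Rep_zero R iw.
have vm : valid m d := Rep_valid m R.
have em : vl m d = i := Rep_vl R dz.
have mN : m < c * wt m + i by have := wt_gt m; nia.
have vm1 : valid m.+1 (upd d m c).
  apply: valid_upd => //; first lia.
  move=> c2; case: hc => [[c1 _]|[_ h]]; first by rewrite c1 in c2.
  have [d2 [v2 n2 e2]] := (exist m i).2 h.
  apply: no2top_eqon n2 => j hj; apply: (uniq v2 vm) => //; by rewrite e2 em.
have zN : forall j, m.+1 <= j -> upd d m c j = 0.
  by move=> j hj; rewrite /upd ifN ?dz //; [lia | apply/eqP; lia].
split.
- exact: valid_ext vm1 zN.
- move=> j hj; apply: zN; lia.
- rewrite (vl_ext zN) ?vl_upd ?em; lia.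
Qed.

Lemma sum_vl N (d : nat -> nat) : \sum_(i < N) d i * wt i = vl N d.
Proof. elim: N => [|N IH]; first by rewrite big_ord0. by rewrite big_ord_recr /= IH. Qed.

Definition dc n (c : {ffun 'I_n -> 'I_3}) (j : nat) : nat :=
  if (insub j : option 'I_n) is Some o then c o else 0.

Lemma dc_ord n (c : {ffun 'I_n -> 'I_3}) (o : 'I_n) : dc c o = c o.
Proof. by rewrite /dc valK. Qed.

Lemma dc_out n (c : {ffun 'I_n -> 'I_3}) j : n <= j -> dc c j = 0.
Proof. by move=> h; rewrite /dc insubN // -leqNgt. Qed.

Lemma CGrep_Rep n (c : {ffun 'I_n -> 'I_3}) : CGrep c -> Rep n (dc c).
Proof.
case/andP=> /eqP hs /forallP hp; split.
- split.
    move=> i hi; rewrite -[i]/(nat_of_ord (Ordinal hi)) dc_ord.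
    by have := ltn_ord (c (Ordinal hi)).
  move=> i j hij hj; have hi : i < n by lia.
  rewrite -[i]/(nat_of_ord (Ordinal hi)) -[j]/(nat_of_ord (Ordinal hj)) !dc_ord => ci cj.
  have /forallP/(_ (Ordinal hj)) := hp (Ordinal hi).
  rewrite /= hij ci cj /= => /existsP [m /and3P [m1 m2 /eqP m3]].
  by exists m; split=> //; rewrite dc_ord.
- by move=> j; apply: dc_out.
- rewrite -sum_vl -[X in _ = X]hs; apply: eq_bigr => i _.
  by rewrite dc_ord.
Qed.

Lemma Rep_CGrep n d : Rep n d -> CGrep [ffun i : 'I_n => (inord (d i) : 'I_3)].
Proof.
move=> R; have [[h1 h2] _ e] := R.
have E : forall i : 'I_n, ([ffun i : 'I_n => (inord (d i) : 'I_3)] i : nat) = d i.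
  by move=> i; rewrite ffunE inordK //; apply: h1.
apply/andP; split.
  apply/eqP; rewrite -[X in _ = X]e -sum_vl; apply: eq_bigr => i _; by rewrite E.
apply/forallP => i; apply/forallP => j; apply/implyP; rewrite !E.
case/and3P => hij /eqP di /eqP dj.
have [m [m1 m2 m3]] := h2 i j hij (ltn_ord j) di dj.
have hm : m < n by have := ltn_ord j; lia.
apply/existsP; exists (Ordinal hm); by rewrite /= E /= m1 m2 m3.
Qed.

Lemma CG_char n : exists d, Rep n d /\
  (forall x, x \in CG n <-> exists j, d j <> 0 /\ x = wt j).
Proof.
rewrite /CG; case: pickP => [c Hc | Hn]; last first.
  have [d R] := Rep_exists n; by have := Hn [ffun i : 'I_n => (inord (d i) : 'I_3)]; rewrite Rep_CGrep.
exists (dc c); split; first exact: CGrep_Rep.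
move=> x; split.
  case/mapP => i; rewrite mem_filter => /andP [/eqP ci _] ->.
  by exists i; rewrite dc_ord; split=> //; move=> h; apply: ci; apply/eqP; rewrite h.
case=> j [nz ->]; have hj : j < n by case: (ltnP j n) => // h; case: nz; apply: dc_out.
apply/mapP; exists (Ordinal hj) => //; rewrite mem_filter mem_enum andbT.
by move: nz; rewrite -[j]/(nat_of_ord (Ordinal hj)) dc_ord => /eqP.
Qed.

Lemma inA_iff K n d : Rep n d ->
  (inA K.+1 n <-> [/\ 0 < n, d K <> 0 & forall j, j < K -> d j = 0]).
Proof.
move=> R; have [d' [R' M]] := CG_char n; have U := Rep_uniq R R'.
rewrite /inA -/(wt K); split.
  case/and3P => pn /M [j [nz /wt_inj e]] /allP A; subst j.
  split=> //; first by rewrite U.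
  move=> j hj; apply/eqP; apply/negPn/negP => /eqP nz2.
  have /A : wt j \in CG n by apply/M; exists j; rewrite -U.
  by rewrite wt_leE; lia.
case=> pn nz z; apply/and3P; split=> //.
  by apply/M; exists K; rewrite -U.
apply/allP => x /M [j [nz' ->]]; rewrite wt_leE.
case: (leqP K j) => // h; by case: nz'; rewrite -U z.
Qed.

Lemma maxCG_iff T n : 0 < n -> (maxCG_is n (wt T) <-> wt T <= n < wt T.+1).
Proof.
move=> pn; have [d [R M]] := CG_char n.
rewrite /maxCG_is; split.
  case/andP => /M [j [nz /wt_inj e]] /allP A; subst j.
  have zT : forall j, T.+1 <= j -> d j = 0.
    move=> j hj; apply/eqP; apply/negPn/negP => /eqP nz'.
    have /A : wt j \in CG n by apply/M; exists j.
    by rewrite wt_leE; lia.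
  apply/andP; split; first exact: Rep_supp nz.
  rewrite -(Rep_vl R zT); exact: (bound (Rep_valid T.+1 R)).1.
case/andP => h1 h2.
have zT : forall j, T.+1 <= j -> d j = 0.
  move=> j hj; apply/eqP; apply/negPn/negP => /eqP nz'.
  have := Rep_supp R nz'; have := wt_le hj; lia.
have nzT : d T <> 0.
  move=> dT; have zT' : forall j, T <= j -> d j = 0.
    move=> j hj; have [h|h] := ltnP T j; first by apply: zT.
    by have -> : j = T by lia.
  have := (bound (Rep_valid T R)).1; rewrite (Rep_vl R zT'); lia.
apply/andP; split; first by apply/M; exists T.
apply/allP => x /M [j [nz' ->]]; rewrite wt_leE.
case: (leqP j T) => // h; by case: nz'; apply: zT.
Qed.

Lemma upd_ne d m c j : j != m -> upd d m c j = d j.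
Proof. by move=> h; rewrite /upd ifN. Qed.

Lemma inA_shift_gt K m c i : K < m ->
  (c = 1 /\ i < wt m \/ c = 2 /\ i < ow m) ->
  inA K.+1 (c * wt m + i) = inA K.+1 i.
Proof.
move=> hK hc; have [d R] := Rep_exists i; have R' := Rep_shift R hc.
have c12 : 1 <= c <= 2 by case: hc => [[-> _]|[-> _]].
have ne : forall j, j <= K -> upd d m c j = d j.
  by move=> j hj; apply: upd_ne; apply/eqP; lia.
apply/idP/idP.
  move/(inA_iff K R') => [_ nz z]; apply/(inA_iff K R); split.
  - case: i R {R' hc} => // R; case: nz; rewrite ne //.
    exact: (Rep_zero R (wt_pos 0)).
  - by rewrite -ne.
  - by move=> j hj; rewrite -ne ?z //; lia.
move/(inA_iff K R) => [pi nz z]; apply/(inA_iff K R'); split.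
- lia.
- by rewrite ne.
- by move=> j hj; rewrite ne ?z //; lia.
Qed.

Lemma inA_shift_eq K c i :
  (c = 1 /\ i < wt K \/ c = 2 /\ i < ow K) ->
  inA K.+1 (c * wt K + i) = (i == 0).
Proof.
move=> hc; have [d R] := Rep_exists i; have R' := Rep_shift R hc.
have c12 : 1 <= c <= 2 by case: hc => [[-> _]|[-> _]].
have iw : i < wt K by case: hc => [[_ h]|[_ h]] //; exact: leq_trans h (ow_le K).
apply/idP/idP.
  move/(inA_iff K R') => [_ nz z]; apply/eqP; apply: (Rep_all0 R) => j.
  have [h|h] := ltnP j K; last exact: (Rep_zero R iw).
  by rewrite -(z j h) upd_ne //; apply/eqP; lia.
move/eqP => i0; subst i.
have dz : forall j, d j = 0 by move=> j; apply: (Rep_zero R (wt_pos 0)).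
apply/(inA_iff K R'); split.
- have := wt_pos K; lia.
- by rewrite /upd eqxx; lia.
- by move=> j hj; rewrite upd_ne ?dz //; apply/eqP; lia.
Qed.

Lemma inA_small K n : n < wt K -> inA K.+1 n = false.
Proof.
move=> h; have [d R] := Rep_exists n.
apply/negbTE/negP => /(inA_iff K R) [_ nz _]; apply: nz; exact: (Rep_zero R h).
Qed.

Fixpoint sumb (f : nat -> bool) n : nat := if n is n'.+1 then sumb f n' + f n' else 0.

Lemma sumb_add f a b : sumb f (a + b) = sumb f a + sumb (fun j => f (a + j)) b.
Proof. elim: b => [|b IH] /=; first by rewrite !addn0. by rewrite addnS /= IH addnA. Qed.

Lemma sumb_eq f g b : (forall j, j < b -> f j = g j) -> sumb f b = sumb g b.
Proof. elim: b => [//|b IH] H /=; rewrite IH ?H //; move=> j hj; apply: H; lia. Qed.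

Lemma sumb_mono f a b : a <= b -> sumb f a <= sumb f b.
Proof. move=> h; rewrite -(subnKC h) sumb_add; lia. Qed.

Lemma sumb_false b : sumb (fun _ => false) b = 0.
Proof. by elim: b => //= b ->. Qed.

Lemma sumb_first b : 0 < b -> sumb (fun j => j == 0) b = 1.
Proof.
case: b => // b _; elim: b => [//|b IH] /=; by rewrite /= in IH; rewrite IH.
Qed.

Definition cnt K := sumb (inA K.+1).

Lemma cnt0 K : cnt K (wt K) = 0.
Proof.
rewrite /cnt (@sumb_eq _ (fun _ => false)) ?sumb_false //.
by move=> j hj; apply: inA_small.
Qed.

Lemma cnt_split K m :
  cnt K (wt m.+1) = cnt K (wt m) + sumb (fun j => inA K.+1 (1 * wt m + j)) (wt m)
     + sumb (fun j => inA K.+1 (2 * wt m + j)) (ow m) /\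
  cnt K (ow m.+1) = cnt K (wt m) + sumb (fun j => inA K.+1 (1 * wt m + j)) (ow m).
Proof.
rewrite /cnt wtS owS !sumb_add mul1n mul2n -addnn; split=> //.
Qed.

Lemma cnt_base K : cnt K (wt K.+1) = 2 /\ cnt K (ow K.+1) = 1.
Proof.
have [-> ->] := cnt_split K K; rewrite cnt0.
rewrite (@sumb_eq _ (fun j => j == 0) (wt K)); last first.
  by move=> j hj; apply: inA_shift_eq; left.
rewrite (@sumb_eq _ (fun j => j == 0) (ow K)); last first.
  by move=> j hj; apply: inA_shift_eq; right.
rewrite (@sumb_eq (fun j => inA K.+1 (1 * wt K + j)) (fun j => j == 0) (ow K)); last first.
  by move=> j hj; apply: inA_shift_eq; left; split=> //; exact: leq_trans hj (ow_le K).
by rewrite !sumb_first ?wt_pos ?ow_pos.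
Qed.

Lemma cnt_step K m : K < m ->
  cnt K (wt m.+1) = cnt K (wt m) + cnt K (wt m) + cnt K (ow m) /\
  cnt K (ow m.+1) = cnt K (wt m) + cnt K (ow m).
Proof.
move=> hK; have [-> ->] := cnt_split K m.
rewrite (@sumb_eq _ (inA K.+1) (wt m)); last first.
  by move=> j hj; apply: inA_shift_gt => //; left.
rewrite (@sumb_eq _ (inA K.+1) (ow m)); last first.
  by move=> j hj; apply: inA_shift_gt => //; right.
rewrite (@sumb_eq (fun j => inA K.+1 (1 * wt m + j)) (inA K.+1) (ow m)); last first.
  by move=> j hj; apply: inA_shift_gt => //; left; split=> //; exact: leq_trans hj (ow_le m).
by [].
Qed.

Lemma cnt_main K j :
  cnt K (wt (K + j.+1)) = fib (2 * j.+1).+1 /\ cnt K (ow (K + j.+1)) = fib (2 * j.+1).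
Proof.
elim: j => [|j [IH1 IH2]]; first by rewrite addn1; exact: cnt_base.
rewrite addnS; have [-> ->] := @cnt_step K (K + j.+1) ltac:(lia).
rewrite IH1 IH2.
have -> : 2 * j.+2 = (2 * j.+1).+2 by lia.
set x := 2 * j.+1.
rewrite (fibSS x.+1) (fibSS x); lia.
Qed.

Lemma posA_eq K n : posA K.+1 n = cnt K n.+1.
Proof.
have H : forall N, \sum_(0 <= m < N) (inA K.+1 m : nat) = sumb (inA K.+1) N.
  elim=> [|N IH]; first by rewrite big_geq.
  by rewrite big_nat_recr //= IH.
rewrite /posA /cnt -H [in RHS]big_ltn //.
Qed.

Theorem lemma3p3 (k l n : nat) : 1 <= k -> 1 <= l ->
  (inA k n /\ maxCG_is n (fib (2 * k + 2 * l))) <->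
  (inA k n /\ fib (2 * l + 1) + 1 <= posA k n <= fib (2 * l + 3)).
Proof.
case: k => [//|K] _; case: l => [//|L] _.
rewrite posA_eq.
have E1 : fib (2 * K.+1 + 2 * L.+1) = wt (K + L.+1) by rewrite /wt; congr fib; lia.
rewrite E1.
have [A1 _] := cnt_main K L.
have [A2 _] := cnt_main K L.+1.
have e3 : fib (2 * L.+1 + 1) = fib (2 * L.+1).+1 by rewrite addn1.
have e4 : fib (2 * L.+1 + 3) = fib (2 * L.+2).+1 by congr fib; lia.
rewrite e3 e4.
rewrite addnS in A2.
set T := K + L.+1 in A1 A2 *.
split=> [[hA hM] | [hA hP]]; split=> //.
- have pn : 0 < n by case/and3P: hA.
  move: hM; rewrite maxCG_iff // => /andP [h1 h2].
  have S : cnt K n.+1 = cnt K n + 1 by rewrite /cnt /= hA.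
  have m1 := sumb_mono (inA K.+1) h1.
  have m2 := sumb_mono (inA K.+1) h2.
  rewrite /cnt in S A1 A2 *; apply/andP; split; lia.
- have pn : 0 < n by case/and3P: hA.
  rewrite maxCG_iff //.
  have S : cnt K n.+1 = cnt K n + 1 by rewrite /cnt /= hA.
  case/andP: hP => p1 p2.
  apply/andP; split.
    case: (leqP (wt T) n) => // h.
    have m1 := sumb_mono (inA K.+1) h.
    rewrite /cnt in S A1 A2 p1 p2 *; lia.
  case: (ltnP n (wt T.+1)) => // h.
  have m1 := sumb_mono (inA K.+1) h.
  rewrite /cnt in S A1 A2 p1 p2 *; lia.
Qed.
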